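(* Let $\alpha\in(1,2)$, $\sigma=1-\alpha/2$, $T>0$, $N$ a positive integer and $\tau=T/N$, and let the coefficients $c_l^{(k,\alpha)}$ be as defined in the context. Then for every integer $k\ge1$: (i) $c_0^{(k,\alpha)}>c_1^{(k,\alpha)}>\cdots>c_{k-1}^{(k,\alpha)}>c_k^{(k,\alpha)}>\frac{3(k+\sigma)^{1-\alpha}}{8}\tau^{2-\alpha}>0$; (ii) $4\sigma c_0^{(k,\alpha)}-(1+2\sigma)c_1^{(k,\alpha)}>0$; and for $1\le k\le N$: (iii) $\sum_{m=1}^{k}c_{m-1}^{(m,\alpha)}<\frac{(8\sigma+21)T^{2-\alpha}}{16(1+2\sigma)\sigma}$; (iv) there is a positive constant $C$, independent of $\tau$ and $k$, such that $$\sum_{m=1}^{k}\big(c_m^{(m,\alpha)}\big)^2\le\frac{9C}{16(1+2\sigma)^2}\begin{cases}\frac{(1+\sigma)^2T^{3-2\alpha}}{3-2\alpha}\tau+(1+\sigma)^{4-2\alpha}, & \alpha\in(1,1.5),\\ (1+\sigma)T, & \alpha=1.5,\\ \frac{2-3\sigma}{2\alpha-3}(1+\sigma)^{4-2\alpha}\tau^{4-2\alpha}, & \alpha\in(1.5,2).\end{cases}$$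
   Context: For integers $k\ge1$ define $a_1^{(k,\alpha)}=\frac32\tau^{2-\alpha}\int_0^{1/2}(s-\frac13)(k+\sigma-s)^{1-\alpha}\,\mathrm{d}s$; $a_l^{(k,\alpha)}=\tau^{2-\alpha}\int_0^1(s-\frac12)(k+\sigma-l+\frac32-s)^{1-\alpha}\,\mathrm{d}s$ for $2\le l\le k$; $b_l^{(k,\alpha)}=\tau^{2-\alpha}\int_0^1(\frac32-s)(k+\sigma-l+\frac12-s)^{1-\alpha}\,\mathrm{d}s$ for $1\le l\le k-1$; $b_k^{(k,\alpha)}=\tau^{2-\alpha}\int_0^{\sigma+1/2}s^{1-\alpha}\,\mathrm{d}s$; $c_l^{(k,\alpha)}=a_{k-l}^{(k,\alpha)}+b_{k-l}^{(k,\alpha)}$ for $0\le l\le k-1$, and $c_k^{(k,\alpha)}=\frac32\tau^{2-\alpha}\int_0^{1/2}(1-s)(k+\sigma-s)^{1-\alpha}\,\mathrm{d}s$. *)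

(* Defs.v *)
From Stdlib Require Import Reals.
From Coquelicot Require Import Coquelicot.
Open Scope R_scope.

Definition sigma_of (alpha : R) : R := 1 - alpha / 2.

Definition acoef (alpha tau : R) (k l : nat) : R :=
  let s0 := sigma_of alpha in
  if Nat.eqb l 1 then
    (3/2) * Rpower tau (2 - alpha) *
      RInt (fun s => (s - 1/3) * Rpower (INR k + s0 - s) (1 - alpha)) 0 (1/2)
  else
    Rpower tau (2 - alpha) *
      RInt (fun s => (s - 1/2) * Rpower (INR k + s0 - INR l + 3/2 - s) (1 - alpha)) 0 1.

Definition bcoef (alpha tau : R) (k l : nat) : R :=
  let s0 := sigma_of alpha in
  if Nat.eqb l k then
    Rpower tau (2 - alpha) *
      RInt_gen (fun s => Rpower s (1 - alpha)) (at_right 0) (at_point (s0 + 1/2))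
  else
    Rpower tau (2 - alpha) *
      RInt (fun s => (3/2 - s) * Rpower (INR k + s0 - INR l + 1/2 - s) (1 - alpha)) 0 1.

Definition ccoef (alpha tau : R) (k l : nat) : R :=
  if Nat.eqb l k then
    (3/2) * Rpower tau (2 - alpha) *
      RInt (fun s => (1 - s) * Rpower (INR k + sigma_of alpha - s) (1 - alpha)) 0 (1/2)
  else acoef alpha tau k (k - l) + bcoef alpha tau k (k - l).

(* Main.v *)
Require Import Defs.
From Stdlib Require Import Reals Lra Lia Psatz.
From Coquelicot Require Import Coquelicot.
Open Scope R_scope.


Lemma rp_pos x e : 0 < Rpower x e.
Proof. unfold Rpower; apply exp_pos. Qed.

Lemma rp_decr e x y : e < 0 -> 0 < x -> x < y -> Rpower y e < Rpower x e.
Proof.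
  intros He Hx Hxy; unfold Rpower; apply exp_increasing.
  pose proof (ln_increasing x y Hx Hxy); nra.
Qed.

Lemma rp_incr e x y : 0 < e -> 0 < x -> x < y -> Rpower x e < Rpower y e.
Proof.
  intros He Hx Hxy; unfold Rpower; apply exp_increasing.
  pose proof (ln_increasing x y Hx Hxy); nra.
Qed.

Lemma rp_decr_le e x y : e < 0 -> 0 < x -> x <= y -> Rpower y e <= Rpower x e.
Proof.
  intros He Hx Hxy; destruct (Req_dec x y) as [->|Hn]; [lra|].
  left; apply rp_decr; lra.
Qed.

Lemma rp_incr_le e x y : 0 <= e -> 0 < x -> x <= y -> Rpower x e <= Rpower y e.
Proof.
  intros He Hx Hxy; destruct (Req_dec x y) as [->|Hn]; [lra|].
  destruct (Req_dec e 0) as [->|He0].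
  - rewrite !Rpower_O; lra.
  - left; apply rp_incr; lra.
Qed.

Lemma is_RInt_quad a b c0 c1 c2 :
  is_RInt (fun s => c0 + c1 * s + c2 * s * s) a b
    (c0 * (b - a) + c1 * (b * b - a * a) / 2 + c2 * (b * b * b - a * a * a) / 3).
Proof.
  set (F := fun s => c0 * s + c1 * (s * s) / 2 + c2 * (s * s * s) / 3).
  replace (c0 * (b - a) + c1 * (b * b - a * a) / 2 + c2 * (b * b * b - a * a * a) / 3)
    with (minus (F b) (F a)).
  2:{ unfold F, minus, plus, opp; simpl; field. }
  apply (@is_RInt_derive R_CompleteNormedModule F).
  - intros x _; unfold F; auto_derive; auto; field.
  - intros x _; apply (@ex_derive_continuous R_AbsRing R_NormedModule); auto_derive; auto.
Qed.

Lemma ex_RInt_quad a b c0 c1 c2 : ex_RInt (fun s => c0 + c1 * s + c2 * s * s) a b.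
Proof. eexists; apply is_RInt_quad. Qed.

Lemma rint_lb (g : R -> R) a b c0 c1 c2 :
  a <= b -> ex_RInt g a b ->
  (forall s, a < s < b -> c0 + c1 * s + c2 * s * s <= g s) ->
  c0 * (b - a) + c1 * (b * b - a * a) / 2 + c2 * (b * b * b - a * a * a) / 3 <= RInt g a b.
Proof.
  intros Hab Hg Hp.
  rewrite <- (is_RInt_unique _ _ _ _ (is_RInt_quad a b c0 c1 c2)).
  apply RInt_le; auto. apply ex_RInt_quad.
Qed.

Lemma rint_ub (g : R -> R) a b c0 c1 c2 :
  a <= b -> ex_RInt g a b ->
  (forall s, a < s < b -> g s <= c0 + c1 * s + c2 * s * s) ->
  RInt g a b <= c0 * (b - a) + c1 * (b * b - a * a) / 2 + c2 * (b * b * b - a * a * a) / 3.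
Proof.
  intros Hab Hg Hp.
  rewrite <- (is_RInt_unique _ _ _ _ (is_RInt_quad a b c0 c1 c2)).
  apply RInt_le; auto. apply ex_RInt_quad.
Qed.

Lemma cont_wp (c d Y e x : R) : 0 < Y - x ->
  continuous (fun s => (c + d * s) * Rpower (Y - s) e) x.
Proof.
  intros H. apply (@ex_derive_continuous R_AbsRing R_NormedModule). unfold Rpower. auto_derive. lra.
Qed.

Lemma ex_wp (c d Y e a b : R) : a <= b -> b < Y ->
  ex_RInt (fun s => (c + d * s) * Rpower (Y - s) e) a b.
Proof.
  intros Hab HbY. apply (@ex_RInt_continuous R_CompleteNormedModule). intros z Hz.
  rewrite Rmin_left in Hz by lra; rewrite Rmax_right in Hz by lra.
  apply cont_wp; lra.
Qed.


Lemma dpow (b u : R) : 0 < u -> derivable_pt_lim (fun x => Rpower x b) u (b * Rpower u (b - 1)).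
Proof. intros; apply derivable_pt_lim_power; auto. Qed.

Lemma dfp_lt b x y : b < 0 -> 0 < x -> x < y -> b * Rpower x (b - 1) < b * Rpower y (b - 1).
Proof.
  intros Hb Hx Hxy. pose proof (rp_decr (b - 1) x y ltac:(lra) Hx Hxy). nra.
Qed.

Lemma chord b x z t : b < 0 -> 0 < x -> x < z -> 0 < t < 1 ->
  Rpower (t * x + (1 - t) * z) b <= t * Rpower x b + (1 - t) * Rpower z b.
Proof.
  intros Hb Hx Hxz Ht.
  set (y := t * x + (1 - t) * z).
  assert (Hxy : x < y) by (unfold y; nra).
  assert (Hyz : y < z) by (unfold y; nra).
  destruct (MVT_cor2 (fun u => Rpower u b) (fun u => b * Rpower u (b - 1)) x y Hxy)
    as [c1 [E1 H1]].
  { intros c Hc; apply dpow; lra. }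
  destruct (MVT_cor2 (fun u => Rpower u b) (fun u => b * Rpower u (b - 1)) y z Hyz)
    as [c2 [E2 H2]].
  { intros c Hc; apply dpow; lra. }
  pose proof (dfp_lt b c1 c2 Hb ltac:(lra) ltac:(lra)) as Hd.
  set (d1 := b * Rpower c1 (b - 1)) in *.
  set (d2 := b * Rpower c2 (b - 1)) in *.
  assert (Eyx : y - x = (1 - t) * (z - x)) by (unfold y; ring).
  assert (Ezy : z - y = t * (z - x)) by (unfold y; ring).
  assert (G : t * Rpower x b + (1 - t) * Rpower z b - Rpower y b
              = t * (1 - t) * (z - x) * (d2 - d1)).
  { replace (t * Rpower x b + (1 - t) * Rpower z b - Rpower y b)
      with (- t * (Rpower y b - Rpower x b) + (1 - t) * (Rpower z b - Rpower y b)) by ring.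
    rewrite E1, E2, Eyx, Ezy. ring. }
  assert (0 <= t * (1 - t) * (z - x) * (d2 - d1)).
  { apply Rmult_le_pos; [|lra]. apply Rmult_le_pos; [|lra]. nra. }
  lra.
Qed.

Lemma D_decr b y y' : b < 0 -> 0 < y -> y <= y' ->
  Rpower y' b - Rpower (y' + 1) b <= Rpower y b - Rpower (y + 1) b.
Proof.
  intros Hb Hy Hyy.
  destruct (Req_dec y y') as [<-|Hn]; [lra|].
  destruct (MVT_cor2 (fun u => Rpower u b - Rpower (u + 1) b)
              (fun u => b * Rpower u (b - 1) - b * Rpower (u + 1) (b - 1)) y y' ltac:(lra))
    as [c [E H]].
  { intros c Hc. apply derivable_pt_lim_minus.
    - apply dpow; lra.
    - replace (b * Rpower (c + 1) (b - 1)) with ((b * Rpower (c + 1) (b - 1)) * 1) by ring.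
      apply (derivable_pt_lim_comp (fun u => u + 1) (fun x => Rpower x b)).
      + apply is_derive_Reals. auto_derive; auto.
      + apply dpow; lra. }
  pose proof (dfp_lt b c (c + 1) Hb ltac:(lra) ltac:(lra)). nra.
Qed.

Lemma D_pos b y : b < 0 -> 0 < y -> 0 < Rpower y b - Rpower (y + 1) b.
Proof. intros; pose proof (rp_decr b y (y + 1) H H0 ltac:(lra)); lra. Qed.

Lemma yfy b x y : -1 < b -> 0 < x -> x <= y -> x * Rpower x b <= y * Rpower y b.
Proof.
  intros Hb Hx Hxy.
  assert (E : forall u, 0 < u -> u * Rpower u b = Rpower u (b + 1)).
  { intros u Hu. rewrite Rpower_plus, Rpower_1 by auto. ring. }
  rewrite !E by lra. apply rp_incr_le; lra.
Qed.


Ltac exri := apply (@ex_RInt_continuous R_CompleteNormedModule); intros z Hz;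
  rewrite ?Rmin_left, ?Rmax_right in Hz by lra;
  apply (@ex_derive_continuous R_AbsRing R_NormedModule); unfold Rpower; auto_derive;
  repeat split; lra.

Lemma RInt_sub f g a b : ex_RInt f a b -> ex_RInt g a b ->
  RInt f a b - RInt g a b = RInt (fun x => f x - g x) a b.
Proof.
  intros Hf Hg. exact (eq_sym (@RInt_minus R_CompleteNormedModule f g a b Hf Hg)).
Qed.

Lemma RInt_add f g a b : ex_RInt f a b -> ex_RInt g a b ->
  RInt f a b + RInt g a b = RInt (fun x => f x + g x) a b.
Proof.
  intros Hf Hg. exact (eq_sym (@RInt_plus R_CompleteNormedModule f g a b Hf Hg)).
Qed.

Definition I1 b Y := RInt (fun s => (s - 1/2) * Rpower (Y - s) b) 0 1.
Definition I2 b Y := RInt (fun s => (3/2 - s) * Rpower (Y - s) b) 0 1.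
Definition I3 b Y := RInt (fun s => (s - 1/3) * Rpower (Y - s) b) 0 (1/2).
Definition I4 b Y := RInt (fun s => (1 - s) * Rpower (Y - s) b) 0 (1/2).


Lemma mono (b : R) (Hb : -1 < b < 0) u v : 0 < u -> u <= v -> Rpower v b <= Rpower u b.
Proof. intros; apply rp_decr_le; lra. Qed.

Lemma I1_nonneg (b : R) (Hb : -1 < b < 0) Y : 1 < Y -> 0 <= I1 b Y.
Proof.
  intros HY. unfold I1. set (F := Rpower (Y - 1/2) b).
  eapply Rle_trans; [|apply (rint_lb _ 0 1 (-(1/2) * F) F 0)]; [lra|lra|exri|].
  intros s Hs.
  destruct (Rle_dec s (1/2)).
  - pose proof (mono b Hb (Y - 1/2) (Y - s) ltac:(lra) ltac:(lra)). unfold F. nra.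
  - pose proof (mono b Hb (Y - s) (Y - 1/2) ltac:(lra) ltac:(lra)). unfold F. nra.
Qed.

Lemma I1_diff (b : R) (Hb : -1 < b < 0) Y : 1 < Y -> I1 b (Y + 1) <= I1 b Y.
Proof.
  intros HY. unfold I1.
  cut (0 <= RInt (fun s => (s - 1/2) * Rpower (Y - s) b) 0 1 -
             RInt (fun s => (s - 1/2) * Rpower (Y + 1 - s) b) 0 1); [lra|].
  rewrite RInt_sub by exri.
  set (F := Rpower (Y - 1/2) b - Rpower (Y - 1/2 + 1) b).
  eapply Rle_trans; [|apply (rint_lb _ 0 1 (-(1/2) * F) F 0)]; [lra|lra|exri|].
  intros s Hs.
  replace (Y + 1 - s) with (Y - s + 1) by ring.
  destruct (Rle_dec s (1/2)).
  - pose proof (D_decr b (Y - 1/2) (Y - s) ltac:(lra) ltac:(lra) ltac:(lra)). unfold F. nra.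
  - pose proof (D_decr b (Y - s) (Y - 1/2) ltac:(lra) ltac:(lra) ltac:(lra)). unfold F. nra.
Qed.

Lemma I1_upper (b : R) (Hb : -1 < b < 0) Y : 1 < Y -> I1 b Y <= (1/2) * (Rpower (Y - 1) b - Rpower Y b).
Proof.
  intros HY. unfold I1. set (F := Rpower (Y - 1/2) b).
  set (G := Rpower (Y - 1) b - Rpower Y b).
  eapply Rle_trans; [apply (rint_ub _ 0 1 (-(1/2) * F + (1/2) * G) F 0)|]; [lra|exri| |lra].
  intros s Hs.
  pose proof (mono b Hb (Y - 1/2) (Y - s)). pose proof (mono b Hb (Y - s) (Y - 1/2)).
  pose proof (mono b Hb (Y - 1) (Y - s) ltac:(lra) ltac:(lra)).
  pose proof (mono b Hb (Y - s) Y ltac:(lra) ltac:(lra)).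
  pose proof (mono b Hb (Y - 1) (Y - 1/2) ltac:(lra) ltac:(lra)).
  pose proof (mono b Hb (Y - 1/2) Y ltac:(lra) ltac:(lra)).
  unfold F, G in *.
  destruct (Rle_dec s (1/2)).
  - specialize (H ltac:(lra) ltac:(lra)). nra.
  - specialize (H0 ltac:(lra) ltac:(lra)). nra.
Qed.

Lemma I2_diff (b : R) (Hb : -1 < b < 0) Y : 1 < Y -> I2 b (Y + 1) + (Rpower Y b - Rpower (Y + 1) b) <= I2 b Y.
Proof.
  intros HY. unfold I2.
  cut (Rpower Y b - Rpower (Y + 1) b <= RInt (fun s => (3/2 - s) * Rpower (Y - s) b) 0 1 -
             RInt (fun s => (3/2 - s) * Rpower (Y + 1 - s) b) 0 1); [lra|].
  rewrite RInt_sub by exri.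
  set (F := Rpower Y b - Rpower (Y + 1) b).
  eapply Rle_trans; [|apply (rint_lb _ 0 1 ((3/2) * F) (- F) 0)]; [lra|lra|exri|].
  intros s Hs.
  replace (Y + 1 - s) with (Y - s + 1) by ring.
  pose proof (D_decr b (Y - s) Y ltac:(lra) ltac:(lra) ltac:(lra)). unfold F. nra.
Qed.

Lemma I2_chord (b : R) (Hb : -1 < b < 0) Y : 1 < Y -> I2 b Y <= (5/12) * Rpower (Y - 1) b + (7/12) * Rpower Y b.
Proof.
  intros HY. unfold I2. set (F0 := Rpower (Y - 1) b). set (F1 := Rpower Y b).
  eapply Rle_trans;
    [apply (rint_ub _ 0 1 ((3/2) * F1) ((3/2) * (F0 - F1) - F1) (- (F0 - F1)))|];
    [lra|exri| |lra].
  intros s Hs.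
  pose proof (chord b (Y - 1) Y s ltac:(lra) ltac:(lra) ltac:(lra) ltac:(lra)) as C.
  replace (s * (Y - 1) + (1 - s) * Y) with (Y - s) in C by ring.
  unfold F0, F1 in *. nra.
Qed.

Lemma I2_lower (b : R) (Hb : -1 < b < 0) Y : 1 < Y -> Rpower Y b <= I2 b Y.
Proof.
  intros HY. unfold I2. set (F := Rpower Y b).
  eapply Rle_trans; [|apply (rint_lb _ 0 1 ((3/2) * F) (- F) 0)]; [lra|lra|exri|].
  intros s Hs. pose proof (mono b Hb (Y - s) Y ltac:(lra) ltac:(lra)). unfold F in *. nra.
Qed.

Lemma I3_upper (b : R) (Hb : -1 < b < 0) Y : 1 <= Y -> I3 b Y <= 0.
Proof.
  intros HY. unfold I3. set (F := Rpower (Y - 1/2) b). set (G := Rpower Y b).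
  assert (HFG : F <= 2 * G).
  { pose proof (yfy b (Y - 1/2) Y ltac:(lra) ltac:(lra) ltac:(lra)).
    pose proof (rp_pos (Y - 1/2) b). unfold F, G in *. nra. }
  assert (HGF : G <= F) by (apply (mono b Hb); lra).
  eapply Rle_trans; [apply (rint_ub _ 0 (1/2) (-(1/3) * G) G ((2/3) * (F - G)))|];
    [lra|exri| |lra].
  intros s Hs.
  pose proof (mono b Hb (Y - s) Y ltac:(lra) ltac:(lra)).
  pose proof (mono b Hb (Y - 1/2) (Y - s) ltac:(lra) ltac:(lra)).
  fold G in H. fold F in H0.
  destruct (Rle_dec s (1/3)).
  - nra.
  - assert (s - 1/3 <= (2/3) * s * s) by nra. nra.
Qed.

Lemma I3_lower (b : R) (Hb : -1 < b < 0) Y : 1/2 < Y -> -(1/24) * Rpower (Y - 1/2) b <= I3 b Y.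
Proof.
  intros HY. unfold I3. set (G := Rpower (Y - 1/3) b).
  assert (G <= Rpower (Y - 1/2) b) by (apply (mono b Hb); lra).
  eapply Rle_trans; [|apply (rint_lb _ 0 (1/2) (-(1/3) * G) G 0)]; [lra|lra|exri|].
  intros s Hs.
  destruct (Rle_dec s (1/3)).
  - pose proof (mono b Hb (Y - 1/3) (Y - s) ltac:(lra) ltac:(lra)). fold G in H0. nra.
  - pose proof (mono b Hb (Y - s) (Y - 1/3) ltac:(lra) ltac:(lra)). fold G in H0. nra.
Qed.

Lemma I4_upper (b : R) (Hb : -1 < b < 0) Y : 1/2 < Y -> I4 b Y <= (3/8) * Rpower (Y - 1/2) b.
Proof.
  intros HY. unfold I4. set (F := Rpower (Y - 1/2) b).
  eapply Rle_trans; [apply (rint_ub _ 0 (1/2) F (- F) 0)|]; [lra|exri| |lra].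
  intros s Hs. pose proof (mono b Hb (Y - 1/2) (Y - s) ltac:(lra) ltac:(lra)). fold F in H. nra.
Qed.

Lemma I4_lower (b : R) (Hb : -1 < b < 0) Y : 1/2 < Y -> (3/8) * Rpower Y b <= I4 b Y.
Proof.
  intros HY. unfold I4. set (F := Rpower Y b).
  eapply Rle_trans; [|apply (rint_lb _ 0 (1/2) F (- F) 0)]; [lra|lra|exri|].
  intros s Hs. pose proof (mono b Hb (Y - s) Y ltac:(lra) ltac:(lra)). fold F in H. nra.
Qed.



Lemma exp_succ e u : 0 < u -> exp ((e + 1) * ln u) = exp (e * ln u) * u.
Proof.
  intros Hu. replace ((e + 1) * ln u) with (e * ln u + ln u) by ring.
  rewrite exp_plus, exp_ln by auto. reflexivity.
Qed.

Lemma is_RInt_pow e Y : e + 1 <> 0 -> 1 < Y ->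
  is_RInt (fun s => Rpower (Y - s) e) 0 1
    ((Rpower Y (e + 1) - Rpower (Y - 1) (e + 1)) / (e + 1)).
Proof.
  intros He HY.
  set (G := fun s => - (Rpower (Y - s) (e + 1)) / (e + 1)).
  replace ((Rpower Y (e + 1) - Rpower (Y - 1) (e + 1)) / (e + 1)) with (minus (G 1) (G 0)).
  2:{ unfold G, minus, plus, opp; simpl. replace (Y - 0) with Y by ring. field; auto. }
  apply (@is_RInt_derive R_CompleteNormedModule G).
  - intros x Hx. rewrite Rmin_left, Rmax_right in Hx by lra.
    unfold G, Rpower. auto_derive.
    + lra.
    + replace (Y + - x) with (Y - x) by ring. rewrite exp_succ by lra. field. split; lra.
  - intros x Hx. rewrite Rmin_left, Rmax_right in Hx by lra.
    apply (@ex_derive_continuous R_AbsRing R_NormedModule). unfold Rpower. auto_derive. lra.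
Qed.

Lemma RInt_pow e Y : e + 1 <> 0 -> 1 < Y ->
  RInt (fun s => Rpower (Y - s) e) 0 1 = (Rpower Y (e + 1) - Rpower (Y - 1) (e + 1)) / (e + 1).
Proof. intros; apply is_RInt_unique, is_RInt_pow; auto. Qed.

Lemma I2_int b (Hb : -1 < b < 0) Y : 1 < Y ->
  I2 b Y <= (Rpower Y (b + 1) - Rpower (Y - 1) (b + 1)) / (b + 1).
Proof.
  intros HY. unfold I2. set (F := Rpower (Y - 1/2) b).
  apply Rle_trans with (RInt (fun s => Rpower (Y - s) b + ((F/2) + (-F) * s + 0 * s * s)) 0 1).
  - apply RInt_le; [lra|exri|unfold F; exri|].
    intros s Hs.
    destruct (Rle_dec s (1/2)).
    + pose proof (mono b Hb (Y - 1/2) (Y - s) ltac:(lra) ltac:(lra)). fold F in H. nra.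
    + pose proof (mono b Hb (Y - s) (Y - 1/2) ltac:(lra) ltac:(lra)). fold F in H. nra.
  - rewrite <- RInt_add.
    + rewrite RInt_pow by lra.
      rewrite (is_RInt_unique _ _ _ _ (is_RInt_quad 0 1 (F/2) (-F) 0)). lra.
    + eexists; apply is_RInt_pow; lra.
    + apply ex_RInt_quad.
Qed.


Lemma derive_G b x : b + 1 <> 0 -> 0 < x ->
  is_derive (fun u => Rpower u (b + 1) / (b + 1)) x (Rpower x b).
Proof.
  intros Hb Hx. unfold Rpower. auto_derive; [lra|].
  rewrite exp_succ by lra. field. split; lra.
Qed.

Lemma B_value b r : -1 < b -> 0 < r ->
  RInt_gen (fun s => Rpower s b) (at_right 0) (at_point r) = Rpower r (b + 1) / (b + 1).
Proof.
  intros Hb Hr.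
  set (G := fun u => Rpower u (b + 1) / (b + 1)).
  assert (HQ : at_right 0 (fun x => 0 < x < r)).
  { exists (mkposreal r Hr). intros y Hy Hy0. unfold ball in Hy; simpl in Hy.
    unfold AbsRing_ball, abs, minus, plus, opp in Hy; simpl in Hy.
    split; auto. apply Rabs_def2 in Hy. lra. }
  apply is_RInt_gen_unique.
  replace (Rpower r (b + 1) / (b + 1)) with (G r - 0) by (unfold G; ring).
  apply (is_RInt_gen_ext (Derive G)).
  { apply (Filter_prod _ _ _ (fun x => 0 < x < r) (fun y => y = r)); [exact HQ|reflexivity|].
    intros x y Hx Hy; subst y; simpl; intros z Hz.
    rewrite Rmin_left, Rmax_right in Hz by lra.
    apply is_derive_unique, derive_G; lra. }
  apply is_RInt_gen_Derive.
  - apply (Filter_prod _ _ _ (fun x => 0 < x < r) (fun y => y = r)); [exact HQ|reflexivity|].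
    intros x y Hx Hy; subst y; simpl; intros z Hz.
    rewrite Rmin_left, Rmax_right in Hz by lra.
    eexists; apply derive_G; lra.
  - apply (Filter_prod _ _ _ (fun x => 0 < x < r) (fun y => y = r)); [exact HQ|reflexivity|].
    intros x y Hx Hy; subst y; simpl; intros z Hz.
    rewrite Rmin_left, Rmax_right in Hz by lra.
    apply (continuous_ext_loc _ (fun u => Rpower u b)).
    + generalize (open_gt 0 z ltac:(lra)). apply filter_imp.
      intros u Hu. symmetry; apply is_derive_unique, derive_G; lra.
    + apply (@ex_derive_continuous R_AbsRing R_NormedModule). unfold Rpower. auto_derive. lra.
  - apply filterlim_locally. intros eps.
    assert (Hd : 0 < Rpower (eps * (b + 1)) (1 / (b + 1))) by apply rp_pos.
    exists (mkposreal _ Hd). intros y Hy Hy0. simpl in Hy.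
    unfold ball in Hy |- *; simpl in Hy |- *.
    unfold AbsRing_ball, abs, minus, plus, opp in Hy |- *; simpl in Hy |- *.
    apply Rabs_def2 in Hy. destruct Hy as [Hy1 _].
    change (UniformSpace.sort R_UniformSpace) with R in y, Hy1, Hy0 |- *.
    rewrite Ropp_0, Rplus_0_r in Hy1.
    assert (Rpower y (b + 1) < eps * (b + 1)).
    { replace (eps * (b + 1)) with (Rpower (Rpower (eps * (b + 1)) (1 / (b + 1))) (b + 1)).
      - apply rp_incr; lra.
      - rewrite Rpower_mult. replace (1 / (b + 1) * (b + 1)) with 1 by (field; lra).
        apply Rpower_1. destruct eps; simpl; nra. }
    pose proof (rp_pos y (b + 1)).
    unfold G. rewrite Rabs_right.
    + apply Rmult_lt_reg_r with (b + 1); [lra|]. field_simplify; lra.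
    + replace (Rpower y (b + 1) / (b + 1) + - 0) with (Rpower y (b + 1) / (b + 1)) by ring.
      apply Rle_ge, Rdiv_le_0_compat; lra.
  - intros P HP. unfold filtermap, at_point. exact (locally_singleton _ _ HP).
Qed.


Definition Bint alpha : R := RInt_gen (fun s => Rpower s (1 - alpha)) (at_right 0)
   (at_point (sigma_of alpha + 1/2)).

Lemma cc_k alpha tau k : ccoef alpha tau k k =
  3/2 * Rpower tau (2 - alpha) * I4 (1 - alpha) (INR k + sigma_of alpha).
Proof. unfold ccoef. rewrite Nat.eqb_refl. reflexivity. Qed.

Lemma cc_mid alpha tau k l : (1 <= l)%nat -> (l + 2 <= k)%nat ->
  ccoef alpha tau k l = Rpower tau (2 - alpha) * I1 (1 - alpha) (sigma_of alpha + INR l + 3/2)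
    + Rpower tau (2 - alpha) * I2 (1 - alpha) (sigma_of alpha + INR l + 1/2).
Proof.
  intros H1 H2. unfold ccoef, acoef, bcoef.
  replace (l =? k)%nat with false by (symmetry; apply Nat.eqb_neq; lia).
  replace (k - l =? 1)%nat with false by (symmetry; apply Nat.eqb_neq; lia).
  replace (k - l =? k)%nat with false by (symmetry; apply Nat.eqb_neq; lia).
  cbv beta iota zeta. rewrite minus_INR by lia.
  replace (INR k + sigma_of alpha - (INR k - INR l) + 3/2) with (sigma_of alpha + INR l + 3/2) by ring.
  replace (INR k + sigma_of alpha - (INR k - INR l) + 1/2) with (sigma_of alpha + INR l + 1/2) by ring.
  reflexivity.
Qed.

Lemma cc_last alpha tau k l : (1 <= l)%nat -> (l + 1 = k)%nat ->
  ccoef alpha tau k l = 3/2 * Rpower tau (2 - alpha) * I3 (1 - alpha) (INR k + sigma_of alpha)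
    + Rpower tau (2 - alpha) * I2 (1 - alpha) (sigma_of alpha + INR l + 1/2).
Proof.
  intros H1 H2. unfold ccoef, acoef, bcoef.
  replace (l =? k)%nat with false by (symmetry; apply Nat.eqb_neq; lia).
  replace (k - l =? 1)%nat with true by (symmetry; apply Nat.eqb_eq; lia).
  replace (k - l =? k)%nat with false by (symmetry; apply Nat.eqb_neq; lia).
  cbv beta iota zeta. rewrite minus_INR by lia.
  replace (INR k + sigma_of alpha - (INR k - INR l) + 1/2) with (sigma_of alpha + INR l + 1/2) by ring.
  reflexivity.
Qed.

Lemma cc_0 alpha tau k : (2 <= k)%nat ->
  ccoef alpha tau k 0 = Rpower tau (2 - alpha) * I1 (1 - alpha) (sigma_of alpha + 3/2)
    + Rpower tau (2 - alpha) * Bint alpha.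
Proof.
  intros H. unfold ccoef, acoef, bcoef.
  replace (0 =? k)%nat with false by (symmetry; apply Nat.eqb_neq; lia).
  rewrite Nat.sub_0_r.
  replace (k =? 1)%nat with false by (symmetry; apply Nat.eqb_neq; lia).
  rewrite Nat.eqb_refl.
  cbv beta iota zeta.
  replace (INR k + sigma_of alpha - INR k + 3/2) with (sigma_of alpha + 3/2) by ring.
  reflexivity.
Qed.

Lemma cc_10 alpha tau :
  ccoef alpha tau 1 0 = 3/2 * Rpower tau (2 - alpha) * I3 (1 - alpha) (INR 1 + sigma_of alpha)
    + Rpower tau (2 - alpha) * Bint alpha.
Proof. reflexivity. Qed.

Lemma Bint_val alpha : 1 < alpha < 2 ->
  @eq R (Bint alpha) ((sigma_of alpha + 1/2) * Rpower (sigma_of alpha + 1/2) (1 - alpha) / (2 - alpha)).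
Proof.
  intros H. unfold Bint. rewrite B_value.
  - rewrite Rpower_plus. rewrite (Rpower_1 (sigma_of alpha + 1/2)) by (unfold sigma_of; lra).
    replace (1 - alpha + 1) with (2 - alpha) by ring. rewrite (Rmult_comm (Rpower _ _)). reflexivity.
  - lra.
  - unfold sigma_of; lra.
Qed.


Lemma INR_ge1 n : (1 <= n)%nat -> 1 <= INR n.
Proof. intros H. apply (le_INR 1 n) in H. simpl in H. lra. Qed.

Lemma part12 alpha tau k : 1 < alpha < 2 -> 0 < tau -> (1 <= k)%nat ->
  ((forall l : nat, (l < k)%nat -> ccoef alpha tau k l > ccoef alpha tau k (S l)) /\
      ccoef alpha tau k k > 3 * Rpower (INR k + sigma_of alpha) (1 - alpha) / 8 * Rpower tau (2 - alpha) /\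
      3 * Rpower (INR k + sigma_of alpha) (1 - alpha) / 8 * Rpower tau (2 - alpha) > 0) /\
     4 * sigma_of alpha * ccoef alpha tau k 0 - (1 + 2 * sigma_of alpha) * ccoef alpha tau k 1 > 0.
Proof.
  intros Ha Ht Hk.
  assert (Hb : -1 < 1 - alpha < 0) by lra.
  assert (Hs : 0 < sigma_of alpha < 1/2) by (unfold sigma_of; lra).
  assert (Hsb : 2 - alpha = 2 * sigma_of alpha) by (unfold sigma_of; lra).
  pose proof (Bint_val alpha Ha) as HB.
  set (s := sigma_of alpha) in *.
  set (b := 1 - alpha) in *.
  set (P := Rpower tau (2 - alpha)) in *.
  assert (HP : 0 < P) by apply rp_pos.
  set (F0 := Rpower (s + 1/2) b) in *.
  assert (HF0 : 0 < F0) by apply rp_pos.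
  set (B := Bint alpha) in *.
  assert (HB4 : 4 * s * B = (1 + 2 * s) * F0).
  { rewrite HB, Hsb. field. lra. }
  assert (HBF : F0 < B).
  { assert (B * (2 * s) = (s + 1/2) * F0) by (rewrite HB, Hsb; field; lra). nra. }
  assert (E1 : INR 1 = 1) by reflexivity.
  assert (E2 : INR 2 = 2) by reflexivity.
  assert (Hlow : ccoef alpha tau k k > 3 * Rpower (INR k + s) b / 8 * P /\
                 3 * Rpower (INR k + s) b / 8 * P > 0).
  { rewrite cc_k. fold s b P.
    pose proof (INR_ge1 k Hk).
    pose proof (I4_lower b Hb (INR k + s) ltac:(lra)).
    pose proof (rp_pos (INR k + s) b). split; nra. }
  split; [split; [|exact Hlow]|].
  -
    intros l Hl.
    destruct (Nat.eq_dec k 1) as [->|Hk1].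
    + assert (l = 0)%nat by lia. subst l.
      rewrite cc_10, cc_k. fold s b P B.
      pose proof (I3_lower b Hb (INR 1 + s) ltac:(lra)).
      pose proof (I4_upper b Hb (INR 1 + s) ltac:(lra)).
      replace (INR 1 + s - 1/2) with (s + 1/2) in * by (rewrite E1; lra).
      repeat match goal with H : context [Rpower (s + 1/2) b] |- _ => progress fold F0 in H end. nra.
    + destruct l as [|m].
      * destruct (Nat.eq_dec k 2) as [->|Hk2].
        -- rewrite cc_0 by lia. rewrite (cc_last _ _ 2 1) by lia. fold s b P B.
           pose proof (I1_nonneg b Hb (s + 3/2) ltac:(lra)).
           pose proof (I3_upper b Hb (INR 2 + s) ltac:(rewrite E2; lra)).
           pose proof (I2_chord b Hb (s + INR 1 + 1/2) ltac:(rewrite E1; lra)).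
           replace (s + INR 1 + 1/2 - 1) with (s + 1/2) in * by (rewrite E1; lra).
           pose proof (mono b Hb (s + 1/2) (s + INR 1 + 1/2) ltac:(lra) ltac:(rewrite E1; lra)).
           repeat match goal with H : context [Rpower (s + 1/2) b] |- _ => progress fold F0 in H end. nra.
        -- rewrite cc_0 by lia. rewrite (cc_mid _ _ k 1) by lia. fold s b P B.
           pose proof (I1_diff b Hb (s + 3/2) ltac:(lra)).
           replace (s + 3/2 + 1) with (s + INR 1 + 3/2) in * by (rewrite E1; lra).
           pose proof (I2_chord b Hb (s + INR 1 + 1/2) ltac:(rewrite E1; lra)).
           replace (s + INR 1 + 1/2 - 1) with (s + 1/2) in * by (rewrite E1; lra).
           pose proof (mono b Hb (s + 1/2) (s + INR 1 + 1/2) ltac:(lra) ltac:(rewrite E1; lra)).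
           repeat match goal with H : context [Rpower (s + 1/2) b] |- _ => progress fold F0 in H end. nra.
      * assert (Hm : 1 <= INR (S m)) by (apply INR_ge1; lia).
        destruct (Nat.eq_dec (S (S m)) k) as [Ek|Ek].
        -- subst k. rewrite (cc_last _ _ (S (S m)) (S m)) by lia. rewrite cc_k. fold s b P.
           rewrite S_INR with (n := S m).
           pose proof (I3_lower b Hb (INR (S m) + 1 + s) ltac:(lra)).
           pose proof (I4_upper b Hb (INR (S m) + 1 + s) ltac:(lra)).
           pose proof (I2_lower b Hb (s + INR (S m) + 1/2) ltac:(lra)).
           replace (INR (S m) + 1 + s - 1/2) with (s + INR (S m) + 1/2) in * by lra.
           pose proof (rp_pos (s + INR (S m) + 1/2) b). nra.
        -- destruct (Nat.eq_dec (S (S (S m))) k) as [Ek2|Ek2].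
           ++ subst k. rewrite (cc_mid _ _ (S (S (S m))) (S m)) by lia.
              rewrite (cc_last _ _ (S (S (S m))) (S (S m))) by lia. fold s b P.
              pose proof (I1_nonneg b Hb (s + INR (S m) + 3/2) ltac:(lra)).
              pose proof (I3_upper b Hb (INR (S (S (S m))) + s)
                            ltac:(rewrite !S_INR in *; lra)).
              pose proof (I2_diff b Hb (s + INR (S m) + 1/2) ltac:(lra)).
              pose proof (D_pos b (s + INR (S m) + 1/2) ltac:(lra) ltac:(lra)).
              replace (s + INR (S m) + 1/2 + 1) with (s + INR (S (S m)) + 1/2) in *
                by (rewrite (S_INR (S m)); lra).
              nra.
           ++ rewrite (cc_mid _ _ k (S m)) by lia.
              rewrite (cc_mid _ _ k (S (S m))) by lia. fold s b P.
              pose proof (I1_diff b Hb (s + INR (S m) + 3/2) ltac:(lra)).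
              pose proof (I2_diff b Hb (s + INR (S m) + 1/2) ltac:(lra)).
              pose proof (D_pos b (s + INR (S m) + 1/2) ltac:(lra) ltac:(lra)).
              replace (s + INR (S m) + 1/2 + 1) with (s + INR (S (S m)) + 1/2) in *
                by (rewrite (S_INR (S m)); lra).
              replace (s + INR (S m) + 3/2 + 1) with (s + INR (S (S m)) + 3/2) in *
                by (rewrite (S_INR (S m)); lra).
              nra.
  -
    assert (HB4P : P * (4 * s * B) = P * ((1 + 2 * s) * F0)) by (rewrite HB4; reflexivity).
    destruct (Nat.eq_dec k 1) as [->|Hk1].
    + rewrite cc_10, cc_k. fold s b P B.
      pose proof (I3_lower b Hb (INR 1 + s) ltac:(lra)).
      pose proof (I4_upper b Hb (INR 1 + s) ltac:(lra)).
      replace (INR 1 + s - 1/2) with (s + 1/2) in * by (rewrite E1; lra).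
      repeat match goal with H : context [Rpower (s + 1/2) b] |- _ => progress fold F0 in H end.
      set (J3 := I3 b (INR 1 + s)) in *. set (J4 := I4 b (INR 1 + s)) in *.
      assert (Hx : 0 < 6 * s * J3 + (1 + 2 * s) * F0 - 3/2 * (1 + 2 * s) * J4) by nra.
      pose proof (Rmult_lt_0_compat _ _ HP Hx). nra.
    + destruct (Nat.eq_dec k 2) as [->|Hk2].
      * rewrite cc_0 by lia. rewrite (cc_last _ _ 2 1) by lia. fold s b P B.
        pose proof (I1_nonneg b Hb (s + 3/2) ltac:(lra)).
        pose proof (I3_upper b Hb (INR 2 + s) ltac:(rewrite E2; lra)).
        pose proof (I2_chord b Hb (s + INR 1 + 1/2) ltac:(rewrite E1; lra)).
        replace (s + INR 1 + 1/2 - 1) with (s + 1/2) in * by (rewrite E1; lra).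
        pose proof (rp_decr b (s + 1/2) (s + INR 1 + 1/2) ltac:(lra) ltac:(lra) ltac:(rewrite E1; lra)).
        repeat match goal with H : context [Rpower (s + 1/2) b] |- _ => progress fold F0 in H end.
        set (J1 := I1 b (s + 3/2)) in *. set (J3 := I3 b (INR 2 + s)) in *.
        set (K2 := I2 b (s + INR 1 + 1/2)) in *.
        set (F1 := Rpower (s + INR 1 + 1/2) b) in *.
        assert (Hx : 0 < 4 * s * J1 + (1 + 2 * s) * (F0 - 3/2 * J3 - K2)) by nra.
        pose proof (Rmult_lt_0_compat _ _ HP Hx). nra.
      * rewrite cc_0 by lia. rewrite (cc_mid _ _ k 1) by lia. fold s b P B.
        pose proof (I1_diff b Hb (s + 3/2) ltac:(lra)).
        pose proof (I1_upper b Hb (s + INR 1 + 3/2) ltac:(rewrite E1; lra)).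
        replace (s + 3/2 + 1) with (s + INR 1 + 3/2) in * by (rewrite E1; lra).
        pose proof (I2_chord b Hb (s + INR 1 + 1/2) ltac:(rewrite E1; lra)).
        pose proof (rp_decr b (s + 1/2) (s + INR 1 + 1/2) ltac:(lra) ltac:(lra) ltac:(rewrite E1; lra)).
        pose proof (D_decr b (s + 1/2) (s + INR 1 + 1/2) ltac:(lra) ltac:(lra) ltac:(rewrite E1; lra)).
        replace (s + INR 1 + 1/2 - 1) with (s + 1/2) in * by (rewrite E1; lra).
        replace (s + INR 1 + 3/2 - 1) with (s + INR 1 + 1/2) in * by lra.
        replace (s + 1/2 + 1) with (s + INR 1 + 1/2) in * by (rewrite E1; lra).
        replace (s + INR 1 + 1/2 + 1) with (s + INR 1 + 3/2) in * by lra.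
        repeat match goal with H : context [Rpower (s + 1/2) b] |- _ => progress fold F0 in H end.
        set (F1 := Rpower (s + INR 1 + 1/2) b) in *.
        set (F2 := Rpower (s + INR 1 + 3/2) b) in *.
        set (J1 := I1 b (s + 3/2)) in *. set (J2 := I1 b (s + INR 1 + 3/2)) in *.
        set (K2 := I2 b (s + INR 1 + 1/2)) in *.
        assert (0 < (1 + 2 * s) * (7/12) * (F0 - F1) - (1 - 2 * s) * (1/2) * (F1 - F2)) by nra.
        assert (4 * s * J1 - (1 + 2 * s) * J2 >= - (1 - 2 * s) * (1/2) * (F1 - F2)) by nra.
        assert ((1 + 2 * s) * (F0 - K2) >= (1 + 2 * s) * (7/12) * (F0 - F1)) by nra.
        assert (Hx : 0 < 4 * s * J1 + (1 + 2 * s) * (F0 - J2 - K2)) by nra.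
        pose proof (Rmult_lt_0_compat _ _ HP Hx). nra.
Qed.


Lemma sum_f_11 g : sum_f 1 1 g = g 1%nat.
Proof. reflexivity. Qed.

Lemma sum_f_S1 g k : (1 <= k)%nat -> sum_f 1 (S k) g = sum_f 1 k g + g (S k).
Proof.
  intros Hk. unfold sum_f.
  replace (S k - 1)%nat with (S (k - 1)) by lia. simpl sum_f_R0 at 1.
  f_equal. f_equal. lia.
Qed.

Lemma Bint_val2 alpha : 1 < alpha < 2 ->
  Bint alpha = Rpower (sigma_of alpha + 1/2) (2 - alpha) / (2 - alpha).
Proof.
  intros H. rewrite Bint_val by auto.
  replace (2 - alpha) with ((1 - alpha) + 1) at 2 by ring.
  rewrite Rpower_plus, Rpower_1 by (unfold sigma_of; lra). unfold Rdiv; ring.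
Qed.

Lemma part3_aux alpha tau k : 1 < alpha < 2 -> 0 < tau -> (1 <= k)%nat ->
  sum_f 1 k (fun m => ccoef alpha tau m (m - 1))
  <= Rpower tau (2 - alpha) * Rpower (sigma_of alpha + INR k - 1/2) (2 - alpha) / (2 - alpha).
Proof.
  intros Ha Ht Hk.
  assert (Hb : -1 < 1 - alpha < 0) by lra.
  assert (Hs : 0 < sigma_of alpha < 1/2) by (unfold sigma_of; lra).
  assert (HP : 0 < Rpower tau (2 - alpha)) by apply rp_pos.
  induction k as [|k IH]; [lia|].
  destruct (Nat.eq_dec k 0) as [->|Hk0].
  - rewrite sum_f_11. simpl (1 - 1)%nat. rewrite cc_10, Bint_val2 by auto.
    pose proof (I3_upper (1 - alpha) Hb (INR 1 + sigma_of alpha) ltac:(simpl; lra)).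
    replace (sigma_of alpha + INR 1 - 1/2) with (sigma_of alpha + 1/2) by (simpl; lra).
    assert (0 < 2 - alpha) by lra.
    set (X := Rpower (sigma_of alpha + 1 / 2) (2 - alpha)).
    assert (HX : 0 <= Rpower tau (2 - alpha) * X / (2 - alpha)).
    { apply Rdiv_le_0_compat; [apply Rmult_le_pos; [lra|left; apply rp_pos]|lra]. }
    nra.
  - rewrite sum_f_S1 by lia.
    specialize (IH ltac:(lia)).
    replace (S k - 1)%nat with k by lia.
    rewrite (cc_last _ _ (S k) k) by lia.
    pose proof (INR_ge1 k ltac:(lia)).
    pose proof (I3_upper (1 - alpha) Hb (INR (S k) + sigma_of alpha) ltac:(rewrite S_INR; lra)).
    pose proof (I2_int (1 - alpha) Hb (sigma_of alpha + INR k + 1/2) ltac:(lra)).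
    replace (1 - alpha + 1) with (2 - alpha) in * by ring.
    replace (sigma_of alpha + INR k + 1/2 - 1) with (sigma_of alpha + INR k - 1/2) in * by lra.
    replace (sigma_of alpha + INR (S k) - 1/2) with (sigma_of alpha + INR k + 1/2) by (rewrite S_INR; lra).
    set (P := Rpower tau (2 - alpha)) in *.
    set (A1 := Rpower (sigma_of alpha + INR k - 1 / 2) (2 - alpha)) in *.
    set (A2 := Rpower (sigma_of alpha + INR k + 1 / 2) (2 - alpha)) in *.
    set (J2 := I2 (1 - alpha) (sigma_of alpha + INR k + 1 / 2)) in *.
    set (J3 := I3 (1 - alpha) (INR (S k) + sigma_of alpha)) in *.
    assert (P * J2 <= P * ((A2 - A1) / (2 - alpha))) by (apply Rmult_le_compat_l; lra).
    assert (P * J3 <= 0) by nra.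
    assert (E : P * A2 / (2 - alpha) = P * A1 / (2 - alpha) + P * ((A2 - A1) / (2 - alpha)))
      by (field; lra).
    rewrite E. lra.
Qed.

Lemma part3 alpha T N k : 1 < alpha < 2 -> 0 < T -> (1 <= N)%nat -> (1 <= k <= N)%nat ->
  sum_f 1 k (fun m => ccoef alpha (T / INR N) m (m - 1))
       < (8 * sigma_of alpha + 21) * Rpower T (2 - alpha) / (16 * (1 + 2 * sigma_of alpha) * sigma_of alpha).
Proof.
  intros Ha HT HN Hk.
  assert (Hs : 0 < sigma_of alpha < 1/2) by (unfold sigma_of; lra).
  assert (Hsb : 2 - alpha = 2 * sigma_of alpha) by (unfold sigma_of; lra).
  pose proof (INR_ge1 N HN) as HN1. pose proof (INR_ge1 k ltac:(lia)) as Hk1.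
  assert (HkN : INR k <= INR N) by (apply le_INR; lia).
  set (tau := T / INR N).
  assert (Ht : 0 < tau) by (unfold tau; apply Rdiv_lt_0_compat; lra).
  assert (Htk : tau * INR k <= T).
  { unfold tau. apply (Rmult_le_reg_r (INR N)); [lra|].
    field_simplify; [|lra]. nra. }
  pose proof (part3_aux alpha tau k Ha Ht ltac:(lia)) as Hm.
  eapply Rle_lt_trans; [exact Hm|].
  set (s := sigma_of alpha) in *.
  assert (H1 : Rpower (s + INR k - 1/2) (2 - alpha) <= Rpower (INR k) (2 - alpha))
    by (apply rp_incr_le; lra).
  assert (H2 : Rpower tau (2 - alpha) * Rpower (INR k) (2 - alpha) <= Rpower T (2 - alpha)).
  { rewrite Rpower_mult_distr by lra. apply rp_incr_le; [lra| |lra].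
    apply Rmult_lt_0_compat; lra. }
  pose proof (rp_pos tau (2 - alpha)). pose proof (rp_pos T (2 - alpha)).
  pose proof (rp_pos (s + INR k - 1/2) (2 - alpha)).
  set (RT := Rpower T (2 - alpha)) in *.
  assert (Rpower tau (2 - alpha) * Rpower (s + INR k - 1 / 2) (2 - alpha) <= RT) by nra.
  apply Rle_lt_trans with (RT / (2 - alpha)).
  - apply Rmult_le_compat_r; [left; apply Rinv_0_lt_compat; lra|lra].
  - rewrite Hsb. apply (Rmult_lt_reg_r (16 * (1 + 2 * s) * s)); [nra|].
    field_simplify; try lra. nra.
Qed.


Lemma term_bd alpha tau m : 1 < alpha < 2 -> 0 < tau -> (1 <= m)%nat ->
  (ccoef alpha tau m m) ^ 2 <=
  (81/256) * Rpower tau (4 - 2 * alpha) * Rpower (INR m + sigma_of alpha - 1/2) (2 - 2 * alpha).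
Proof.
  intros Ha Ht Hm. rewrite cc_k.
  assert (Hb : -1 < 1 - alpha < 0) by lra.
  assert (Hs : 0 < sigma_of alpha < 1/2) by (unfold sigma_of; lra).
  pose proof (INR_ge1 m Hm).
  pose proof (I4_upper (1 - alpha) Hb (INR m + sigma_of alpha) ltac:(lra)).
  pose proof (I4_lower (1 - alpha) Hb (INR m + sigma_of alpha) ltac:(lra)).
  pose proof (rp_pos (INR m + sigma_of alpha) (1 - alpha)).
  assert (EP : Rpower tau (4 - 2 * alpha) = Rpower tau (2 - alpha) * Rpower tau (2 - alpha)).
  { rewrite <- Rpower_plus. f_equal. ring. }
  assert (EF : Rpower (INR m + sigma_of alpha - 1/2) (2 - 2 * alpha) =
               Rpower (INR m + sigma_of alpha - 1/2) (1 - alpha) * Rpower (INR m + sigma_of alpha - 1/2) (1 - alpha)).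
  { rewrite <- Rpower_plus. f_equal. ring. }
  rewrite EP, EF.
  pose proof (rp_pos tau (2 - alpha)).
  set (P := Rpower tau (2 - alpha)) in *.
  set (F := Rpower (INR m + sigma_of alpha - 1/2) (1 - alpha)) in *.
  set (J := I4 (1 - alpha) (INR m + sigma_of alpha)) in *.
  assert (0 <= 3/2 * P * J) by nra.
  assert (3/2 * P * J <= (9/16) * P * F) by nra.
  replace ((3/2 * P * J) ^ 2) with ((3/2 * P * J) * (3/2 * P * J)) by ring.
  assert ((3/2 * P * J) * (3/2 * P * J) <= ((9/16) * P * F) * ((9/16) * P * F))
    by (apply Rmult_le_compat; lra).
  nra.
Qed.

Lemma pow_tele e Y : e < 0 -> e + 1 <> 0 -> 1 < Y ->
  Rpower Y e <= (Rpower Y (e + 1) - Rpower (Y - 1) (e + 1)) / (e + 1).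
Proof.
  intros He He1 HY. rewrite <- RInt_pow by auto.
  eapply Rle_trans; [|apply (rint_lb _ 0 1 (Rpower Y e) 0 0)]; [lra|lra|exri|].
  intros s Hs. pose proof (rp_decr_le e (Y - s) Y He ltac:(lra) ltac:(lra)). lra.
Qed.

Lemma sum_le alpha tau k : 1 < alpha <= 3/2 -> 0 < tau -> (1 <= k)%nat ->
  sum_f 1 k (fun m => (ccoef alpha tau m m) ^ 2) <=
  (81/256) * Rpower tau (4 - 2 * alpha) * INR k * Rpower (sigma_of alpha + 1/2) (2 - 2 * alpha).
Proof.
  intros Ha Ht Hk.
  assert (Hs : 0 < sigma_of alpha < 1/2) by (unfold sigma_of; lra).
  pose proof (rp_pos tau (4 - 2 * alpha)).
  induction k as [|k IH]; [lia|].
  destruct (Nat.eq_dec k 0) as [->|Hk0].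
  - rewrite sum_f_11. pose proof (term_bd alpha tau 1 ltac:(lra) Ht ltac:(lia)).
    replace (INR 1 + sigma_of alpha - 1/2) with (sigma_of alpha + 1/2) in * by (simpl; lra).
    simpl INR. lra.
  - rewrite sum_f_S1 by lia. specialize (IH ltac:(lia)).
    pose proof (term_bd alpha tau (S k) ltac:(lra) Ht ltac:(lia)).
    pose proof (INR_ge1 k ltac:(lia)).
    assert (Rpower (INR (S k) + sigma_of alpha - 1/2) (2 - 2 * alpha) <=
            Rpower (sigma_of alpha + 1/2) (2 - 2 * alpha)).
    { apply rp_decr_le; [lra|lra|rewrite S_INR; lra]. }
    rewrite S_INR. nra.
Qed.

Lemma sum_gt alpha tau k : 3/2 < alpha < 2 -> 0 < tau -> (1 <= k)%nat ->
  sum_f 1 k (fun m => (ccoef alpha tau m m) ^ 2) <=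
  (81/256) * Rpower tau (4 - 2 * alpha) *
   (Rpower (sigma_of alpha + 1/2) (2 - 2 * alpha)
    + Rpower (sigma_of alpha + 1/2) (3 - 2 * alpha) / (2 * alpha - 3)
    - Rpower (INR k + sigma_of alpha - 1/2) (3 - 2 * alpha) / (2 * alpha - 3)).
Proof.
  intros Ha Ht Hk.
  assert (Hs : 0 < sigma_of alpha < 1/2) by (unfold sigma_of; lra).
  pose proof (rp_pos tau (4 - 2 * alpha)).
  induction k as [|k IH]; [lia|].
  destruct (Nat.eq_dec k 0) as [->|Hk0].
  - rewrite sum_f_11. pose proof (term_bd alpha tau 1 ltac:(lra) Ht ltac:(lia)).
    replace (INR 1 + sigma_of alpha - 1/2) with (sigma_of alpha + 1/2) in * by (simpl; lra).
    lra.
  - rewrite sum_f_S1 by lia. specialize (IH ltac:(lia)).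
    pose proof (term_bd alpha tau (S k) ltac:(lra) Ht ltac:(lia)).
    pose proof (INR_ge1 k ltac:(lia)).
    pose proof (pow_tele (2 - 2 * alpha) (INR (S k) + sigma_of alpha - 1/2) ltac:(lra) ltac:(lra)
                  ltac:(rewrite S_INR; lra)).
    replace (2 - 2 * alpha + 1) with (3 - 2 * alpha) in * by ring.
    replace (INR (S k) + sigma_of alpha - 1/2 - 1) with (INR k + sigma_of alpha - 1/2) in *
      by (rewrite S_INR; lra).
    set (Q := Rpower tau (4 - 2 * alpha)) in *.
    set (A := Rpower (INR (S k) + sigma_of alpha - 1 / 2) (3 - 2 * alpha)) in *.
    set (A0 := Rpower (INR k + sigma_of alpha - 1 / 2) (3 - 2 * alpha)) in *.
    set (G := Rpower (INR (S k) + sigma_of alpha - 1 / 2) (2 - 2 * alpha)) in *.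
    assert (E1 : (A - A0) / (3 - 2 * alpha) = A0 / (2 * alpha - 3) - A / (2 * alpha - 3))
      by (field; lra).
    rewrite E1 in H2.
    assert (Q * G <= Q * (A0 / (2 * alpha - 3) - A / (2 * alpha - 3)))
      by (apply Rmult_le_compat_l; lra).
    nra.
Qed.


Lemma part4 alpha T : 1 < alpha < 2 -> 0 < T ->
  let s0 := sigma_of alpha in
  (exists C : R, 0 < C /\
     forall (N k : nat), (1 <= N)%nat -> (1 <= k <= N)%nat ->
       let tau := T / INR N in
       let S := sum_f 1 k (fun m => (ccoef alpha tau m m) ^ 2) in
       let K := 9 * C / (16 * (1 + 2 * s0) ^ 2) in
       (alpha < 3/2 ->
          S <= K * ((1 + s0) ^ 2 * Rpower T (3 - 2 * alpha) / (3 - 2 * alpha) * tau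
                    + Rpower (1 + s0) (4 - 2 * alpha))) /\
       (alpha = 3/2 -> S <= K * ((1 + s0) * T)) /\
       (3/2 < alpha ->
          S <= K * ((2 - 3 * s0) / (2 * alpha - 3) * Rpower (1 + s0) (4 - 2 * alpha)
                    * Rpower tau (4 - 2 * alpha)))).
Proof.
  intros Ha HT s0.
  assert (Hs : 0 < s0 < 1/2) by (unfold s0, sigma_of; lra).
  assert (Hq : 0 < (1 + 2 * s0) ^ 2) by (apply pow_lt; lra).
  assert (Hgen : forall N k, (1 <= N)%nat -> (1 <= k <= N)%nat ->
            0 < T / INR N /\ T / INR N <= T /\ T / INR N * INR k <= T).
  { intros N k HN Hk.
    pose proof (INR_ge1 N HN). pose proof (INR_ge1 k ltac:(lia)).
    assert (INR k <= INR N) by (apply le_INR; lia).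
    split; [apply Rdiv_lt_0_compat; lra|split].
    - apply (Rmult_le_reg_r (INR N)); [lra|]. field_simplify; [|lra]. nra.
    - apply (Rmult_le_reg_r (INR N)); [lra|]. field_simplify; [|lra]. nra. }
  set (M := Rpower (s0 + 1/2) (2 - 2 * alpha)).
  assert (HM : 0 < M) by apply rp_pos.
  destruct (total_order_T alpha (3/2)) as [[Hlt|Heq]|Hgt].
  - set (Z := (81/256) * M * Rpower T (3 - 2 * alpha) * T).
    assert (HZ : 0 < Z) by (pose proof (rp_pos T (3 - 2 * alpha)); unfold Z; repeat apply Rmult_lt_0_compat; lra).
    pose proof (rp_pos (1 + s0) (4 - 2 * alpha)) as HR.
    exists (Z * 16 * (1 + 2 * s0) ^ 2 / (9 * Rpower (1 + s0) (4 - 2 * alpha))).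
    split.
    { apply Rdiv_lt_0_compat; [apply Rmult_lt_0_compat; [lra|exact Hq]|]. repeat apply Rmult_lt_0_compat; lra. }
    intros N k HN Hk tau S K.
    destruct (Hgen N k HN Hk) as [Ht [HtT Htk]].
    fold tau in Ht, HtT, Htk.
    split; [|split]; intros; try lra.
    pose proof (sum_le alpha tau k ltac:(lra) Ht ltac:(lia)) as HS. fold S in HS.
    fold s0 in HS. fold M in HS.
    assert (EQ : Rpower tau (4 - 2 * alpha) = Rpower tau (3 - 2 * alpha) * tau).
    { replace (4 - 2 * alpha) with ((3 - 2 * alpha) + 1) by ring.
      rewrite Rpower_plus, Rpower_1 by lra. reflexivity. }
    assert (Hp1 : Rpower tau (3 - 2 * alpha) <= Rpower T (3 - 2 * alpha))
      by (apply rp_incr_le; lra).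
    pose proof (rp_pos tau (3 - 2 * alpha)).
    pose proof (INR_ge1 k ltac:(lia)).
    assert (Hp2 : Rpower tau (4 - 2 * alpha) * INR k <= Rpower T (3 - 2 * alpha) * T).
    { rewrite EQ. replace (Rpower tau (3 - 2 * alpha) * tau * INR k)
        with (Rpower tau (3 - 2 * alpha) * (tau * INR k)) by ring.
      apply Rmult_le_compat; nra. }
    assert (HS2 : S <= Z).
    { unfold Z. eapply Rle_trans; [exact HS|]. nra. }
    assert (HK : K * Rpower (1 + s0) (4 - 2 * alpha) = Z).
    { unfold K. field. split; lra. }
    assert (HK0 : 0 < K) by (unfold K; apply Rdiv_lt_0_compat; [apply Rmult_lt_0_compat; [lra|apply Rdiv_lt_0_compat; nra]|lra]).
    assert (0 <= (1 + s0) ^ 2 * Rpower T (3 - 2 * alpha) / (3 - 2 * alpha) * tau).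
    { pose proof (rp_pos T (3 - 2 * alpha)).
      apply Rmult_le_pos; [|lra]. apply Rdiv_le_0_compat; [|lra].
      apply Rmult_le_pos; [apply pow_le; lra|lra]. }
    nra.
  - set (Z := (81/256) * M * T).
    assert (HZ : 0 < Z) by (unfold Z; repeat apply Rmult_lt_0_compat; lra).
    exists (Z * 16 * (1 + 2 * s0) ^ 2 / (9 * ((1 + s0) * T))).
    split.
    { apply Rdiv_lt_0_compat; [apply Rmult_lt_0_compat; [lra|exact Hq]|]. repeat apply Rmult_lt_0_compat; lra. }
    intros N k HN Hk tau S K.
    destruct (Hgen N k HN Hk) as [Ht [HtT Htk]].
    fold tau in Ht, HtT, Htk.
    split; [|split]; intros; try lra.
    pose proof (sum_le alpha tau k ltac:(lra) Ht ltac:(lia)) as HS. fold S in HS.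
    fold s0 in HS. fold M in HS.
    assert (EQ : Rpower tau (4 - 2 * alpha) = tau).
    { replace (4 - 2 * alpha) with 1 by lra. apply Rpower_1; lra. }
    rewrite EQ in HS.
    assert (HS2 : S <= Z) by (unfold Z; nra).
    assert (HK : K * ((1 + s0) * T) = Z).
    { unfold K. field. split; nra. }
    lra.
  - set (M' := M + Rpower (s0 + 1/2) (3 - 2 * alpha) / (2 * alpha - 3)).
    assert (HM' : 0 < M').
    { pose proof (rp_pos (s0 + 1/2) (3 - 2 * alpha)). unfold M'.
      assert (0 < Rpower (s0 + 1 / 2) (3 - 2 * alpha) / (2 * alpha - 3))
        by (apply Rdiv_lt_0_compat; lra). lra. }
    set (W := (2 - 3 * s0) / (2 * alpha - 3) * Rpower (1 + s0) (4 - 2 * alpha)).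
    assert (HW : 0 < W).
    { unfold W. pose proof (rp_pos (1 + s0) (4 - 2 * alpha)).
      apply Rmult_lt_0_compat; [apply Rdiv_lt_0_compat|]; unfold s0, sigma_of in *; lra. }
    exists ((81/256) * M' * 16 * (1 + 2 * s0) ^ 2 / (9 * W)).
    split.
    { apply Rdiv_lt_0_compat; [apply Rmult_lt_0_compat; [lra|exact Hq]|]. apply Rmult_lt_0_compat; lra. }
    intros N k HN Hk tau S K.
    destruct (Hgen N k HN Hk) as [Ht [HtT Htk]].
    fold tau in Ht, HtT, Htk.
    split; [|split]; intros; try lra.
    pose proof (sum_gt alpha tau k ltac:(lra) Ht ltac:(lia)) as HS. fold S in HS.
    fold s0 in HS. fold M in HS.
    pose proof (INR_ge1 k ltac:(lia)).
    pose proof (rp_pos (INR k + s0 - 1/2) (3 - 2 * alpha)).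
    assert (0 < Rpower (INR k + s0 - 1 / 2) (3 - 2 * alpha) / (2 * alpha - 3))
      by (apply Rdiv_lt_0_compat; lra).
    pose proof (rp_pos tau (4 - 2 * alpha)).
    set (Q := Rpower tau (4 - 2 * alpha)) in *.
    assert (HS2 : S <= (81/256) * Q * M') by (unfold M'; nra).
    fold W.
    assert (HK : K * (W * Q) = (81/256) * Q * M').
    { unfold K. field. split; lra. }
    replace (K * (W * Q)) with (K * (W * Q)) by reflexivity.
    lra.
Qed.

Theorem lemma1 (alpha T : R) :
  1 < alpha < 2 -> 0 < T ->
  let s0 := sigma_of alpha in
  (* (i) and (ii): for every N >= 1 (tau = T/N) and every k >= 1 *)
  (forall (N k : nat), (1 <= N)%nat -> (1 <= k)%nat ->
     let tau := T / INR N in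
     ((forall l : nat, (l < k)%nat -> ccoef alpha tau k l > ccoef alpha tau k (S l)) /\
      ccoef alpha tau k k > 3 * Rpower (INR k + s0) (1 - alpha) / 8 * Rpower tau (2 - alpha) /\
      3 * Rpower (INR k + s0) (1 - alpha) / 8 * Rpower tau (2 - alpha) > 0) /\
     4 * s0 * ccoef alpha tau k 0 - (1 + 2 * s0) * ccoef alpha tau k 1 > 0) /\
  (* (iii) *)
  (forall (N k : nat), (1 <= N)%nat -> (1 <= k <= N)%nat ->
     let tau := T / INR N in
     sum_f 1 k (fun m => ccoef alpha tau m (m - 1))
       < (8 * s0 + 21) * Rpower T (2 - alpha) / (16 * (1 + 2 * s0) * s0)) /\
  (* (iv) *)
  (exists C : R, 0 < C /\
     forall (N k : nat), (1 <= N)%nat -> (1 <= k <= N)%nat ->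
       let tau := T / INR N in
       let S := sum_f 1 k (fun m => (ccoef alpha tau m m) ^ 2) in
       let K := 9 * C / (16 * (1 + 2 * s0) ^ 2) in
       (alpha < 3/2 ->
          S <= K * ((1 + s0) ^ 2 * Rpower T (3 - 2 * alpha) / (3 - 2 * alpha) * tau
                    + Rpower (1 + s0) (4 - 2 * alpha))) /\
       (alpha = 3/2 -> S <= K * ((1 + s0) * T)) /\
       (3/2 < alpha ->
          S <= K * ((2 - 3 * s0) / (2 * alpha - 3) * Rpower (1 + s0) (4 - 2 * alpha)
                    * Rpower tau (4 - 2 * alpha)))).
Proof.
  intros Ha HT s0.
  split; [|split].
  - intros N k HN Hk tau.
    assert (Ht : 0 < tau).
    { unfold tau. pose proof (INR_ge1 N HN). apply Rdiv_lt_0_compat; lra. }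
    exact (part12 alpha tau k Ha Ht Hk).
  - intros N k HN Hk tau. exact (part3 alpha T N k Ha HT HN Hk).
  - exact (part4 alpha T Ha HT).
Qed.
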